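(* Assume the setting and condition (B) with sequence $s_{j_0}=s_-,s_{j_1}=s_+,\dots,s_{j_n}$, let $S'=S\setminus\{s_{j_n}\}$, $w=s_{j_1}\cdots s_{j_n}$, and let $\tau:W_{S'}\to W_{S/e,N}$ be the isomorphism with $\tau(s)=s$ for $s\notin\{s_{j_0},\dots,s_{j_n}\}$, $\tau(s_{j_\ell})=s_{j_{\ell+1}}$ ($1\le\ell\le n-1$), $\tau(s_{j_0})=s_0$. Define the linear map $\sigma^1:V_{S'}\to V_S$ by $\sigma^1(\alpha_s)=\alpha_s$ for $s\notin\{s_{j_0},\dots,s_{j_n}\}$ and $\sigma^1(\alpha_{s_{j_\ell}})=\sigma_{s_{j_1}}\cdots\sigma_{s_{j_n}}(\alpha_{s_{j_\ell}})$ for $0\le\ell\le n-1$. Then $\sigma^1$ is a linear isomorphism onto $V_{S/e}$, and for all $\alpha\in V_{S'}$, $x\in W_{S'}$, \[ \phi^{\mathrm{aff}}\big(\sigma^1(\alpha),\tau(x)\big)=\big(\sigma_w(\alpha),\,wxw^{-1}\big)\in V_S\rtimes W_{S,M}. \]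
   Context: A Coxeter matrix on $S$ is a symmetric matrix $M=(m_{s,s'})$ with entries in $\mathbb Z_{\ge1}\sqcup\{\infty\}$, $m_{s,s'}=1$ iff $s=s'$; $W_{S,M}$ is generated by $S$ with relations $(ss')^{m_{s,s'}}=1$ for $m_{s,s'}\ne\infty$. Edge contraction: $e=\{s_+,s_-\}$, $m_{s_+,s_-}=3$, $S/e=(S\setminus\{s_+,s_-\})\sqcup\{s_0\}$, $N=(n_{s,s'})$ with $n_{s,s}=1$, $n_{s,s'}=m_{s,s'}$ for distinct $s,s'\ne s_0$, and for $s\ne s_0$: $n_{s,s_0}=m_{s,s_+}+m_{s,s_-}-2$ if $m_{s,s_+}=2$ or $m_{s,s_-}=2$, and $n_{s,s_0}=\infty$ otherwise. $\phi:W_{S/e,N}\to W_{S,M}$ is the (injective) homomorphism $s\mapsto s$ ($s\ne s_0$), $s_0\mapsto s_+s_-s_+$. Condition (B): there exist $n\ge1$ and pairwise distinct $s_{j_0}=s_-,s_{j_1}=s_+,s_{j_2},\dots,s_{j_n}\in S$ with $m_{s_{j_k},s_{j_{k+1}}}=3$ ($0\le k\le n-1$), and for every $1\le k\le n$ and every $s\in S$ different from $s_{j_k}$, $s_{j_{k-1}}$ and (if $k<n$) $s_{j_{k+1}}$, $m_{s_{j_k},s}=2$. Reflection representation: $V_S=\bigoplus_{s\in S}\mathbb R\alpha_s$, $k_{s,s'}=2\cos(\pi/m_{s,s'})$ (with $\pi/\infty=0$), and $\sigma_s(\alpha_{s'})=\alpha_{s'}+k_{s,s'}\alpha_s$; $s\mapsto\sigma_s$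 gives a faithful representation $\sigma$ of $W_{S,M}$; write $\sigma_x$ for the image of $x$. For $S'\subseteq S$, $V_{S'}=\bigoplus_{s\in S'}\mathbb R\alpha_s\subseteq V_S$ is stable under the subgroup $W_{S'}$ generated by $S'$. Let $\alpha_{s_0}:=\alpha_{s_+}+\alpha_{s_-}$ and $V_{S/e}=\bigoplus_{s\in S/e}\mathbb R\alpha_s\subseteq V_S$; $W_{S/e,N}$ acts on $V_{S/e}$ by $\tilde\sigma_s(\alpha_{s'})=\alpha_{s'}+\tilde k_{s,s'}\alpha_s$ with $\tilde k_{s,s'}=2\cos(\pi/n_{s,s'})$. Semidirect products $V\rtimes W$ have multiplication $(\alpha,x)(\beta,y)=(\alpha+x\cdot\beta,xy)$, and $\phi^{\mathrm{aff}}:V_{S/e}\rtimes W_{S/e,N}\to V_S\rtimes W_{S,M}$ is $(\alpha,x)\mapsto(\alpha,\phi(x))$. *)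

(* Defs.v *)
From HB Require Import structures.
From mathcomp Require Import all_boot all_order all_algebra.
From mathcomp Require Import all_classical all_reals all_analysis.
Set Implicit Arguments.
Unset Strict Implicit.
Unset Printing Implicit Defensive.
Import Order.TTheory GRing.Theory Num.Theory.
Local Open Scope ring_scope.

(** Coxeter matrices.  An entry is [Some m] (m in Z_{>=1}) or [None] (= infinity). *)
Definition is_coxeter_matrix (T : finType) (M : T -> T -> option nat) : Prop :=
  (forall s t, M s t = M t s) /\
  (forall s t, M s t <> Some 0%N) /\
  (forall s t, M s t = Some 1%N <-> s = t).

(** The Coxeter group W_{T,M}, given by its presentation: elements are words
    (seq T) modulo the smallest congruence containing (s t)^{m_{s,t}} = 1
    for every finite m_{s,t}.  Since m_{s,s} = 1 every generator is an
    involution, so this monoid presentation presents the group W_{T,M};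
    the inverse of (the class of) a word is (the class of) its reversal. *)
Definition rel_word (T : Type) (s t : T) (m : nat) : seq T :=
  flatten (nseq m [:: s; t]).

Inductive coxeq (T : finType) (M : T -> T -> option nat) : seq T -> seq T -> Prop :=
  | coxeq_refl u : coxeq M u u
  | coxeq_sym u v : coxeq M u v -> coxeq M v u
  | coxeq_trans u v w : coxeq M u v -> coxeq M v w -> coxeq M u w
  | coxeq_ctx a b u v : coxeq M u v -> coxeq M (a ++ u ++ b) (a ++ v ++ b)
  | coxeq_rel s t m : M s t = Some m -> coxeq M (rel_word s t m) [::].

(** Reflection representation on V_T = {ffun T -> R} (coordinates w.r.t. the
    basis alpha_s). *)
Section Refl.
Variable R : realType.

Definition kcoef (T : finType) (M : T -> T -> option nat) (s t : T) : R :=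
  match M s t with
  | Some m => 2 * cos (pi / m%:R)
  | None => 2 (* 2 cos (pi/oo) = 2 cos 0 *)
  end.

Definition alpha (T : finType) (s : T) : {ffun T -> R} :=
  [ffun t => if t == s then 1 else 0].

Definition sigma (T : finType) (M : T -> T -> option nat) (s : T)
    (v : {ffun T -> R}) : {ffun T -> R} :=
  v + (\sum_(t : T) kcoef M s t * v t) *: alpha s.

Definition sigw (T : finType) (M : T -> T -> option nat) (u : seq T)
    (v : {ffun T -> R}) : {ffun T -> R} :=
  foldr (fun s acc => sigma M s acc) v u.

End Refl.

Definition Se (S : finType) (sp sm : S) : predArgType :=
  option {s : S | (s != sp) && (s != sm)}.
(* [None] is the new generator s_0; [Some a] is the generator [val a]. *)

Definition contractM (S : finType) (M : S -> S -> option nat) (sp sm : S)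
    (a b : Se sp sm) : option nat :=
  match a, b with
  | None, None => Some 1%N
  | Some x, Some y => M (val x) (val y)
  | Some x, None | None, Some x =>
      if (M (val x) sp == Some 2%N) || (M (val x) sm == Some 2%N) then
        match M (val x) sp, M (val x) sm with
        | Some p, Some q => Some (p + q - 2)%N
        | _, _ => None
        end
      else None
  end.

Definition phi_word (S : finType) (sp sm : S) (u : seq (Se sp sm)) : seq S :=
  flatten (map (fun a => match a with
                         | Some x => [:: val x]
                         | None => [:: sp; sm; sp]
                         end) u).

(* basis of V_{S/e} inside V_S: alpha_s (s <> s_0) and alpha_{s_0} = alpha_{s_+} + alpha_{s_-} *)
Definition alphaSe (R : realType) (S : finType) (sp sm : S) (a : Se sp sm) : {ffun S -> R} :=
  match a with
  | Some x => alpha R (val x)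
  | None => alpha R sp + alpha R sm
  end.

Definition in_VSe (R : realType) (S : finType) (sp sm : S) (y : {ffun S -> R}) : Prop :=
  exists c : Se sp sm -> R, y = \sum_(a : Se sp sm) c a *: alphaSe R a.

Definition in_VSub (R : realType) (S : finType) (P : pred S) (v : {ffun S -> R}) : Prop :=
  forall s, ~~ P s -> v s = 0.

(** Condition (B) for the edge {s_+, s_-}, with the sequence
    js = [:: s_{j_0}; s_{j_1}; ...; s_{j_n}]. *)
Definition condB (S : finType) (M : S -> S -> option nat) (sp sm : S) (js : seq S) : Prop :=
  [/\ [/\ (2 <= size js)%N, uniq js, nth sm js 0 = sm & nth sm js 1 = sp],
      (forall k, (k.+1 < size js)%N -> M (nth sm js k) (nth sm js k.+1) = Some 3%N) &
      (forall k s, (1 <= k < size js)%N ->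
         s != nth sm js k -> s != nth sm js k.-1 ->
         ((k.+1 < size js)%N -> s != nth sm js k.+1) ->
         M (nth sm js k) s = Some 2%N)].

(* tau : W_{S'} -> W_{S/e,N} on letters of S' = S \ {s_{j_n}}:
   s |-> s (s not in js), s_{j_l} |-> s_{j_{l+1}} (1 <= l <= n-1), s_{j_0} |-> s_0.
   (The [insub] always succeeds on letters of S' under condition (B).) *)
Definition tau_letter (S : finType) (sp sm : S) (js : seq S) (s : S) : Se sp sm :=
  let i := index s js in
  if i == 0%N then None
  else if (i < size js)%N
  then (insub (nth s js i.+1) : option {t : S | (t != sp) && (t != sm)})
  else (insub s : option {t : S | (t != sp) && (t != sm)}).

Definition tau_word (S : finType) (sp sm : S) (js : seq S) (u : seq S) : seq (Se sp sm) :=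
  map (tau_letter sp sm js) u.

Definition sigma1 (R : realType) (S : finType) (M : S -> S -> option nat) (js : seq S)
    (v : {ffun S -> R}) : {ffun S -> R} :=
  \sum_(s : S | s != last s js)
     v s *: (if s \in js then sigw M (behead js) (alpha R s) else alpha R s).

Definition phi_aff (R : realType) (S : finType) (sp sm : S)
    (p : {ffun S -> R} * seq (Se sp sm)) : {ffun S -> R} * seq S :=
  (p.1, phi_word p.2).

Definition sd_eq (R : realType) (S : finType) (M : S -> S -> option nat)
    (p q : {ffun S -> R} * seq S) : Prop :=
  p.1 = q.1 /\ coxeq M p.2 q.2.

(* Main.v *)
Require Import Defs.
From HB Require Import structures.
From mathcomp Require Import all_boot all_order all_algebra.
From mathcomp Require Import all_classical all_reals all_analysis.
From mathcomp Require Import ring lra zify.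
Import Order.TTheory GRing.Theory Num.Theory.
Local Open Scope ring_scope.

Section Cox.
Variables (T : finType) (M : T -> T -> option nat).
Hypothesis HM1 : forall s, M s s = Some 1%N.

Lemma cx_app u u' v v' : coxeq M u u' -> coxeq M v v' -> coxeq M (u ++ v) (u' ++ v').
Proof.
move=> h1 h2; apply: coxeq_trans (_ : coxeq M (u' ++ v) _).
  exact: (coxeq_ctx [::] v h1).
have := coxeq_ctx u' [::] h2; by rewrite !cats0.
Qed.

Lemma cx_del a b s : coxeq M (a ++ [:: s; s] ++ b) (a ++ b).
Proof. exact: (coxeq_ctx a b (coxeq_rel (HM1 s))). Qed.

Lemma cx_comm s t : M s t = Some 2%N -> coxeq M [:: s; t] [:: t; s].
Proof.
move=> h; apply: coxeq_sym.
apply: coxeq_trans (_ : coxeq M ([:: t; s] ++ [:: s; t; s; t] ++ [::]) _).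
  exact: coxeq_sym (coxeq_ctx [:: t; s] [::] (coxeq_rel h)).
apply: coxeq_trans (_ : coxeq M ([:: t] ++ [:: t; s; t]) _).
  exact: (cx_del [:: t] [:: t; s; t] s).
exact: (cx_del [::] [:: s; t] t).
Qed.

Lemma cx_braid s t : M s t = Some 3%N -> coxeq M [:: s; t; s] [:: t; s; t].
Proof.
move=> h; apply: coxeq_sym.
apply: coxeq_trans (_ : coxeq M ([::] ++ [:: s; t; s; t; s; t] ++ [:: t; s; t]) _).
  exact: coxeq_sym (coxeq_ctx [::] [:: t; s; t] (coxeq_rel h)).
apply: coxeq_trans (_ : coxeq M ([:: s; t; s; t; s] ++ [:: s; t]) _).
  exact: (cx_del [:: s; t; s; t; s] [:: s; t] t).
apply: coxeq_trans (_ : coxeq M ([:: s; t; s; t] ++ [:: t]) _).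
  exact: (cx_del [:: s; t; s; t] [:: t] s).
exact: (cx_del [:: s; t; s] [::] t).
Qed.

Lemma cx_inv u : coxeq M (u ++ rev u) [::].
Proof.
elim: u => [|x u IH] /=; first exact: coxeq_refl.
rewrite rev_cons -cats1 catA.
apply: coxeq_trans (_ : coxeq M ([:: x] ++ [::] ++ [:: x]) _).
  exact: (coxeq_ctx [:: x] [:: x] IH).
exact: (cx_del [::] [::] x).
Qed.

Lemma cx_conj_step y u x v : coxeq M (u ++ [:: x] ++ rev u) v ->
  coxeq M ((y :: u) ++ [:: x] ++ rev (y :: u)) ([:: y] ++ v ++ [:: y]).
Proof.
move=> h.
have -> : (y :: u) ++ [:: x] ++ rev (y :: u) = [:: y] ++ (u ++ [:: x] ++ rev u) ++ [:: y].
  by rewrite rev_cons -cats1 /= -!catA.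
exact (coxeq_ctx [:: y] [:: y] h).
Qed.

Lemma cx_conj_comm u x : (forall t, t \in u -> coxeq M [:: t; x] [:: x; t]) ->
  coxeq M (u ++ [:: x] ++ rev u) [:: x].
Proof.
elim: u => [|y u IH] h /=; first exact: coxeq_refl.
have hu : forall t, t \in u -> coxeq M [:: t; x] [:: x; t].
  by move=> t ht; apply: h; rewrite inE ht orbT.
have h1 := @cx_conj_step y u x _ (IH hu).
apply: coxeq_trans h1 _.
have h2 := coxeq_ctx [::] [:: y] (h y (mem_head _ _)).
have h3 := cx_del [:: x] [::] y.
rewrite /= in h2 h3 *.
exact: coxeq_trans h2 h3.
Qed.

End Cox.

Lemma cos_pi3 (R : realType) : cos (pi / 3%:R) = 1 / 2 :> R.
Proof.
set x := pi / 3%:R.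
have hx : pi = x + x + x by rewrite /x; field.
have h := cos2Dsin2 x.
have c3 : cos pi = 4 * cos x ^+ 3 - 3 * cos x.
  rewrite hx !cosD !sinD.
  have h2 : sin x ^+ 2 = 1 - cos x ^+ 2 by rewrite -h; ring.
  have -> : (cos x * cos x - sin x * sin x) * cos x -
      (sin x * cos x + cos x * sin x) * sin x = cos x ^+ 3 - 3 * cos x * sin x ^+ 2 by ring.
  rewrite h2; ring.
have cpos : 0 < cos x.
  apply: cos_gt0_pihalf; have := pi_gt0 R; rewrite /x => hp; apply/andP; split; lra.
rewrite cospi in c3.
have e : (cos x + 1) * (2 * cos x - 1) ^+ 2 = 0.
  have -> : (cos x + 1) * (2 * cos x - 1) ^+ 2 = (4 * cos x ^+ 3 - 3 * cos x) + 1 by ring.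
  by rewrite -c3 addNr.
move/eqP: e; rewrite mulf_eq0 => /orP[/eqP|]; first by lra.
rewrite sqrf_eq0 => /eqP; lra.
Qed.

Section Main.
Variables (R : realType) (S : finType) (M : S -> S -> option nat) (sp sm : S) (js : seq S).
Hypothesis HM : is_coxeter_matrix M.
Hypothesis H3 : M sp sm = Some 3%N.
Hypothesis HB : condB M sp sm js.

Local Notation a k := (nth sm js k).
Local Notation N := (size js).

Lemma Msym s t : M s t = M t s. Proof. by case: HM. Qed.
Lemma M1 s : M s s = Some 1%N. Proof. by case: HM => _ [_ h]; apply/h. Qed.
Lemma N2 : (2 <= N)%N. Proof. by case: HB => [[]]. Qed.
Lemma ujs : uniq js. Proof. by case: HB => [[]]. Qed.
Lemma a0 : a 0 = sm. Proof. by case: HB => [[]]. Qed.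
Lemma a1 : a 1 = sp. Proof. by case: HB => [[]]. Qed.
Lemma path3 k : (k.+1 < N)%N -> M (a k) (a k.+1) = Some 3%N.
Proof. by case: HB => _ h _; apply: h. Qed.
Lemma aeq i j : (i < N)%N -> (j < N)%N -> (a i == a j) = (i == j).
Proof. by move=> hi hj; rewrite nth_uniq // ujs. Qed.
Lemma off2 k j : (1 <= k < N)%N -> (j < N)%N -> j != k -> j != k.-1 -> j != k.+1 ->
  M (a k) (a j) = Some 2%N.
Proof.
move=> hk hj h1 h2 h3; case: HB => _ _ h; apply: h => //.
- by rewrite aeq //; lia.
- by rewrite aeq //; lia.
- by move=> hk1; rewrite aeq //.
Qed.
Lemma off2x k x : (1 <= k < N)%N -> x \notin js -> M (a k) x = Some 2%N.
Proof.
move=> hk hx; have [hk1 hk2] := andP hk; case: HB => _ _ h; apply: h => //.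
- by apply: contraNneq hx => ->; rewrite mem_nth.
- by apply: contraNneq hx => ->; rewrite mem_nth // (leq_ltn_trans (leq_pred _) hk2).
- by move=> hk3; apply: contraNneq hx => ->; rewrite mem_nth.
Qed.

Lemma kc1 s : kcoef R M s s = -2.
Proof. by rewrite /kcoef M1 divr1 cospi mulrN1. Qed.
Lemma kc2 s t : M s t = Some 2%N -> kcoef R M s t = 0.
Proof. by move=> h; rewrite /kcoef h cos_pihalf mulr0. Qed.
Lemma kc3 s t : M s t = Some 3%N -> kcoef R M s t = 1.
Proof. by move=> h; rewrite /kcoef h cos_pi3 mulrC mulfVK // (@pnatr_eq0 R 2). Qed.


Lemma offB k t : (1 <= k < N)%N -> t != a k -> t != a k.-1 ->
  ((k.+1 < N)%N -> t != a k.+1) -> M (a k) t = Some 2%N.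
Proof. by move=> hk h1 h2 h3; case: HB => _ _ h; apply: h. Qed.

Lemma path3' k : (1 <= k < N)%N -> M (a k) (a k.-1) = Some 3%N.
Proof.
move=> /andP[hk1 hk2]; rewrite Msym; have := path3 k.-1; rewrite prednK //.
by apply.
Qed.

Lemma sumk k (u : {ffun S -> R}) : (1 <= k < N)%N ->
  \sum_t kcoef R M (a k) t * u t =
    - 2 * u (a k) + u (a k.-1) + (if (k.+1 < N)%N then u (a k.+1) else 0).
Proof.
move=> hk; have [hk1 hk2] := andP hk.
have hkm : (k.-1 < N)%N by lia.
rewrite (bigD1 (a k)) //= kc1.
rewrite (bigD1 (a k.-1)) /=; last by rewrite aeq //; lia.
rewrite kc3 ?path3' //.
case: ifP => hk3.
  rewrite (bigD1 (a k.+1)) /=; last by rewrite !aeq //; lia.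
  rewrite kc3 ?path3 //.
  rewrite big1 ?addr0; first by ring.
  move=> t /andP[/andP[h1 h2] h3]; rewrite kc2 ?mul0r //.
  by apply: offB.
rewrite big1 ?addr0; first by ring.
move=> t /andP[h1 h2]; rewrite kc2 ?mul0r //.
by apply: offB => // h; rewrite h in hk3.
Qed.

Definition F k (v : {ffun S -> R}) : {ffun S -> R} :=
  [ffun t => if (k <= index t js < N)%N then v (a (index t js).-1) else v t].

Lemma sigw_drop (v : {ffun S -> R}) : v (a N.-1) = 0 ->
  forall d k, (N - k = d)%N -> (1 <= k)%N -> (k <= N)%N -> sigw M (drop k js) v = F k v.
Proof.
move=> hv; elim=> [|d IH] k hd hk1 hk2.
  have -> : k = N by lia.
  rewrite drop_size /=; apply/ffunP => t; rewrite ffunE.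
  by case: ifP => //; lia.
have hkN : (k < N)%N by lia.
rewrite (drop_nth sm hkN) /= IH //; try lia.
apply/ffunP => t; rewrite /sigma !ffunE.
have hkm : (k.-1 < N)%N by lia.
rewrite sumk; last by lia.
have -> : (if (k.+1 < N)%N then (F k.+1 v) (a k.+1) else 0) = v (a k).
  case: ifP => h; first by rewrite ffunE index_uniq ?ujs // leqnn h.
  have -> : k = N.-1 by lia.
  by rewrite hv.
rewrite !ffunE (index_uniq sm hkN ujs) (index_uniq sm hkm ujs).
have -> : (k.+1 <= k < N)%N = false by lia.
have -> : (k.+1 <= k.-1 < N)%N = false by lia.
case: (eqVneq t (a k)) => [->|htk].
  rewrite index_uniq ?ujs // leqnn hkN /= ltnn /=.
  have sc (c : R) : c *: (1:R) = c by rewrite /GRing.scale /= mulr1.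
  rewrite sc.
  ring.
rewrite scaler0 addr0.
have [hi|hi] := eqVneq (index t js) k.
  have ht : t \in js by rewrite -index_mem hi.
  by move: htk; rewrite -hi nth_index // eqxx.
rewrite [in RHS]leq_eqVlt eq_sym (negbTE hi) /=.
done.
Qed.

Lemma scR (c x : R) : c *: x = c * x. Proof. by []. Qed.

Lemma sigma_invol s (v : {ffun S -> R}) : sigma M s (sigma M s v) = v.
Proof.
apply/ffunP => t; rewrite /sigma.
set c := \sum_t0 kcoef R M s t0 * v t0.
have -> : \sum_t0 kcoef R M s t0 * (v + c *: alpha R s) t0 = c - 2 * c.
  rewrite (eq_bigr (fun t0 => kcoef R M s t0 * v t0 + c * kcoef R M s t0 * alpha R s t0)).
    rewrite big_split /= -/c; congr (_ + _).
    rewrite (bigD1 s) //= big1 ?addr0; first by rewrite kc1 !ffunE eqxx; ring.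
    by move=> t0 ht0; rewrite !ffunE (negbTE ht0) mulr0.
  by move=> t0 _; rewrite !ffunE scR; ring.
rewrite !ffunE !scR; ring.
Qed.

Lemma sigw_rev u (v : {ffun S -> R}) : sigw M (rev u) (sigw M u v) = v.
Proof.
elim: u v => [|s u IH] v //=.
rewrite rev_cons -cats1 /sigw foldr_cat /= sigma_invol.
exact: IH.
Qed.

Lemma sum_alpha (c : S -> R) x : \sum_s c s * alpha R s x = c x.
Proof.
rewrite (bigD1 x) //= big1 ?addr0; first by rewrite ffunE eqxx mulr1.
by move=> s hs; rewrite ffunE eq_sym (negbTE hs) mulr0.
Qed.

Lemma lastE x0 : last x0 js = a N.-1.
Proof.
rewrite -nth_last; apply: set_nth_default; have := N2; lia.
Qed.

Lemma HW (v : {ffun S -> R}) : v (a N.-1) = 0 -> sigw M (behead js) v = F 1 v.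
Proof.
move=> hv; rewrite -drop1; apply: (sigw_drop v hv (N - 1)%N 1) => //.
have := N2; lia.
Qed.

Lemma F1_notin s : s \notin js -> F 1 (alpha R s) = alpha R s.
Proof.
move=> hs; apply/ffunP => t; rewrite !ffunE.
case: ifP => // /andP[h1 h2].
have ht : t \in js by rewrite -index_mem.
have hm : a (index t js).-1 \in js by apply: mem_nth; exact: (leq_ltn_trans (leq_pred _) h2).
have -> : (a (index t js).-1 == s) = false by apply/negbTE; apply: contraNneq hs => <-.
by have -> : (t == s) = false by apply/negbTE; apply: contraNneq hs => <-.
Qed.

Lemma HF (v : {ffun S -> R}) : v (a N.-1) = 0 -> sigma1 M js v = F 1 v.
Proof.
move=> hv; apply/ffunP => t; rewrite /sigma1 sum_ffunE.
rewrite (eq_bigl (fun s => s != a N.-1)); last by move=> s; rewrite lastE.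
rewrite (eq_bigr (fun s => v s * F 1 (alpha R s) t)); last first.
  move=> s hs; rewrite ffunE scR; congr (_ * _).
  case: ifP => hin; last by rewrite F1_notin ?hin.
  by rewrite HW // ffunE eq_sym (negbTE hs).
set x := if (1 <= index t js < N)%N then a (index t js).-1 else t.
have hF : forall u : {ffun S -> R}, F 1 u t = u x by move=> u; rewrite /x ffunE; case: ifP.
rewrite hF (eq_bigr (fun s => v s * alpha R s x)); last by move=> s _; rewrite hF.
rewrite big_mkcond /= -(sum_alpha v x); apply: eq_bigr => s _.
by case: ifP => // /negbFE /eqP ->; rewrite hv mul0r.
Qed.

Lemma spm : sp != sm.
Proof. by apply/eqP => e; move: H3; rewrite e M1. Qed.

Lemma inVSe_iff (y : {ffun S -> R}) : in_VSe sp sm y <-> y sp = y sm.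
Proof.
split.
  case=> c ->; rewrite !sum_ffunE.
  have E : forall t, (t == sp) || (t == sm) ->
      \sum_(b : Se sp sm) (c b *: alphaSe R b) t = c None.
    move=> t ht; rewrite (bigD1 None) //= big1 ?addr0.
      rewrite !ffunE scR; case/orP: ht => /eqP ->; rewrite eqxx.
        by rewrite (negbTE spm) addr0 mulr1.
      by rewrite eq_sym (negbTE spm) add0r mulr1.
    case=> [z|] // _; rewrite !ffunE scR.
    have := valP z => /andP[h1 h2].
    case/orP: ht => /eqP ->.
      by rewrite eq_sym (negbTE h1) mulr0.
    by rewrite eq_sym (negbTE h2) mulr0.
  by rewrite !E ?eqxx ?orbT.
move=> h.
exists (fun b => match b with Some z => y (val z) | None => y sp end).
apply/ffunP => t; rewrite sum_ffunE.
case: (boolP ((t != sp) && (t != sm))) => ht.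
  rewrite (bigD1 (Some (exist _ t ht))) //= big1 ?addr0.
    by rewrite !ffunE scR eqxx mulr1.
  case=> [z|] hz; rewrite !ffunE scR.
    have hzt : val z != t.
      apply: contra hz => /eqP hzt; apply/eqP; congr Some.
      by apply: val_inj.
    by rewrite eq_sym (negbTE hzt) mulr0.
  have [h1 h2] := andP ht.
  by rewrite (negbTE h1) (negbTE h2) addr0 mulr0.
rewrite (bigD1 None) //= big1 ?addr0.
  rewrite !ffunE scR.
  move: ht; rewrite negb_and !negbK => /orP[] /eqP ->; rewrite eqxx.
    by rewrite (negbTE spm) addr0 mulr1.
  by rewrite eq_sym (negbTE spm) add0r mulr1 h.
case=> [z|] // _; rewrite !ffunE scR.
have := valP z => /andP[h1 h2].
move: ht; rewrite negb_and !negbK => /orP[] /eqP ->.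
  by rewrite eq_sym (negbTE h1) mulr0.
by rewrite eq_sym (negbTE h2) mulr0.
Qed.


Lemma w_eq : behead js = map (fun k => a k) (iota 1 N.-1).
Proof.
have hN : N = N.-1.+1 by have := N2; lia.
by rewrite -{1}(mkseq_nth sm js) /mkseq hN /=.
Qed.

Lemma phi_word_cons (z : Se sp sm) zs :
  phi_word (z :: zs) = phi_word [:: z] ++ phi_word zs.
Proof. by rewrite /phi_word /= cats0. Qed.

Lemma letter x : x != a N.-1 ->
  coxeq M (phi_word [:: tau_letter sp sm js x]) (behead js ++ [:: x] ++ rev (behead js)).
Proof.
move=> hxn; have hN2 := N2.
have hsp : sp \in js by rewrite -a1 mem_nth.
have hsm : sm \in js by rewrite -a0 mem_nth // (leq_trans _ hN2).
case: (boolP (x \in js)) => hx; last first.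
  have Px : (x != sp) && (x != sm).
    by apply/andP; split; apply: contraNneq hx => ->.
  rewrite /tau_letter memNindex //.
  have -> : (N == 0)%N = false by lia.
  rewrite ltnn (insubT (fun t : S => (t != sp) && (t != sm)) Px) /phi_word /=.
  apply: coxeq_sym; apply: cx_conj_comm; first exact: M1.
  move=> t; rewrite w_eq => /mapP [k hk ->].
  rewrite mem_iota in hk.
  by apply: (@cx_comm _ _ M1); rewrite /=; apply: off2x => //; lia.
have [i hi ->] : exists2 i, (i < N.-1)%N & x = a i.
  exists (index x js); last by rewrite nth_index.
  have : (index x js < N)%N by rewrite index_mem.
  suff : index x js != N.-1 by lia.
  by apply: contraNneq hxn => <-; rewrite nth_index.
have hiN : (i < N)%N by lia.
rewrite /tau_letter index_uniq ?ujs //.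
case: (eqVneq i 0%N) => [->|hi0].
  rewrite /phi_word /= a0.
  rewrite w_eq.
  have -> : N.-1 = N.-2.+1 by lia.
  rewrite /= a1.
  apply: coxeq_sym.
  refine (@cx_conj_step _ _ sp _ sm [:: sm] _).
  apply: cx_conj_comm; first exact: M1.
  move=> t /mapP [k hk ->]; rewrite mem_iota in hk.
  apply: (@cx_comm _ _ M1); rewrite /=; have := off2 k 0; rewrite a0; apply => //; lia.
rewrite hiN (set_nth_default sm); last by lia.
have Px : (a i.+1 != sp) && (a i.+1 != sm).
  have e1 : (a i.+1 == a 1) = false by rewrite aeq //; lia.
  have e0 : (a i.+1 == a 0) = false by rewrite aeq //; lia.
  by rewrite a1 in e1; rewrite a0 in e0; rewrite e1 e0.
rewrite (insubT (fun t : S => (t != sp) && (t != sm)) Px) /phi_word /=.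
set A := map (fun k => a k) (iota 1 i.-1).
set B := map (fun k => a k) (iota i.+2 (N - i.+2)).
have -> : behead js = A ++ [:: a i; a i.+1] ++ B.
  rewrite w_eq.
  have -> : N.-1 = (i.-1 + (N - i.+2).+2)%N by lia.
  rewrite iotaD map_cat.
  have -> : (1 + i.-1 = i)%N by lia.
  by [].
have -> : (A ++ [:: a i; a i.+1] ++ B) ++ [:: a i] ++ rev (A ++ [:: a i; a i.+1] ++ B)
    = A ++ ([:: a i; a i.+1] ++ (B ++ [:: a i] ++ rev B) ++ [:: a i.+1; a i]) ++ rev A.
  by rewrite !rev_cat /= -!catA.
apply: coxeq_sym.
apply: coxeq_trans (_ : coxeq M (A ++ [:: a i.+1] ++ rev A) _); last first.
  apply: cx_conj_comm; first exact: M1.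
  move=> t /mapP [k hk ->]; rewrite mem_iota in hk.
  by apply: (@cx_comm _ _ M1); rewrite /=; apply: off2 => //; lia.
apply: coxeq_ctx.
have hB : coxeq M (B ++ [:: a i] ++ rev B) [:: a i].
  apply: cx_conj_comm; first exact: M1.
  move=> t /mapP [k hk ->]; rewrite mem_iota in hk.
  by apply: (@cx_comm _ _ M1); rewrite /=; apply: off2 => //; lia.
apply: coxeq_trans (_ : coxeq M ([:: a i; a i.+1] ++ [:: a i] ++ [:: a i.+1; a i]) _).
  exact: (coxeq_ctx [:: a i; a i.+1] [:: a i.+1; a i] hB).
have h3 : M (a i.+1) (a i) = Some 3%N by apply: (path3' i.+1); lia.
have hb := coxeq_ctx [:: a i] [:: a i] (@cx_braid _ _ M1 _ _ h3).
have hd1 := @cx_del _ _ M1 [::] [:: a i.+1; a i; a i] (a i).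
have hd2 := @cx_del _ _ M1 [:: a i.+1] [::] (a i).
rewrite /= in hb hd1 hd2 *.
exact: coxeq_trans hb (coxeq_trans hd1 hd2).
Qed.


Lemma words x : all (fun s => s != a N.-1) x ->
  coxeq M (phi_word (tau_word sp sm js x)) (behead js ++ x ++ rev (behead js)).
Proof.
set w := behead js.
elim: x => [|y ys IH].
  move=> _; apply: coxeq_sym; exact: (@cx_inv _ _ M1 w).
move=> /andP[hy hys].
have e : phi_word (tau_word sp sm js (y :: ys)) =
    phi_word [:: tau_letter sp sm js y] ++ phi_word (tau_word sp sm js ys).
  by rewrite -phi_word_cons.
rewrite e.
apply: coxeq_trans (@cx_app _ _ _ _ _ _ (letter y hy) (IH hys)) _.
have hi := coxeq_ctx (w ++ [:: y]) (ys ++ rev w) (@cx_inv _ _ M1 (rev w)).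
rewrite revK in hi.
rewrite -!catA /= in hi *.
exact hi.
Qed.

Lemma main_in :
  let sn := last sm js in
  let inS' := fun s : S => s != sn in
  let w := behead js in
  [/\ (forall v : {ffun S -> R}, in_VSub inS' v -> in_VSe sp sm (sigma1 M js v)),
      (forall v1 v2 : {ffun S -> R}, in_VSub inS' v1 -> in_VSub inS' v2 ->
          sigma1 M js v1 = sigma1 M js v2 -> v1 = v2),
      (forall y : {ffun S -> R}, in_VSe sp sm y -> exists2 v, in_VSub inS' v & sigma1 M js v = y)
    & forall (v : {ffun S -> R}) (x : seq S),
        in_VSub inS' v -> all inS' x ->
        sd_eq M (phi_aff (sigma1 M js v, tau_word sp sm js x))
                (sigw M w v, w ++ x ++ rev w)].
Proof.
move=> sn inS' w.
have hN := N2.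
have Hsn : sn = a N.-1 by rewrite /sn lastE.
have v0 : forall v : {ffun S -> R}, in_VSub inS' v -> v (a N.-1) = 0.
  by move=> v hv; apply: hv; rewrite /inS' negbK Hsn.
have isp : index sp js = 1%N by rewrite -{1}a1 index_uniq ?ujs.
have ism : index sm js = 0%N by rewrite -{1}a0 index_uniq ?ujs // (leq_trans _ hN).
split.
- move=> v hv; rewrite HF ?v0 // inVSe_iff !ffunE isp ism /= hN /=.
  by rewrite a0.
- move=> v1 v2 h1 h2; rewrite !HF ?v0 // -!HW ?v0 // => e.
  by rewrite -(sigw_rev w v1) /w e sigw_rev.
- move=> y /inVSe_iff hy.
  exists [ffun t => if t == a N.-1 then 0 else
           if (1 <= index t js < N)%N then y (a (index t js).+1) else y t].
    by move=> s; rewrite /inS' negbK Hsn => /eqP ->; rewrite ffunE eqxx.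
  rewrite HF; last by rewrite ffunE eqxx.
  apply/ffunP => t; rewrite !ffunE.
  case: ifP => hc.
    have [hc1 hc2] := andP hc.
    have ht : t \in js by rewrite -index_mem.
    have hm : ((index t js).-1 < N)%N by lia.
    rewrite aeq //; last by lia.
    have -> : ((index t js).-1 == N.-1) = false by lia.
    rewrite index_uniq ?ujs //.
    case: (eqVneq (index t js) 1%N) => [e1|ne1].
      rewrite e1 /= a0 -hy -a1 -e1 nth_index //.
    have -> : (1 <= (index t js).-1 < N)%N = true by lia.
    by rewrite prednK ?nth_index //; lia.
  have hN1 : (0 < N.-1 < N)%N by clear -hN; lia.
  have hN2 : (N.-1 < N)%N by case/andP: hN1.
  have -> : (t == a N.-1) = false.
    apply/negbTE/eqP => e; move: hc; rewrite e index_uniq ?ujs // hN1.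
    by [].
  by rewrite hc.
- move=> v x hv hx; split.
    by rewrite /phi_aff /= HF ?v0 // -HW ?v0.
  rewrite /phi_aff /=.
  apply: words.
  by move: hx; rewrite /inS' Hsn.
Qed.

End Main.

Theorem mainTheorem3 (R : realType) (S : finType) (M : S -> S -> option nat)
    (sp sm : S) (js : seq S) :
  is_coxeter_matrix M ->
  M sp sm = Some 3%N ->
  condB M sp sm js ->
  let sn := last sm js in             (* s_{j_n} *)
  let inS' := fun s : S => s != sn in  (* S' = S \ {s_{j_n}} *)
  let w := behead js in                (* w = s_{j_1} ... s_{j_n} *)
  (* sigma^1 is a linear isomorphism of V_{S'} onto V_{S/e} *)
  [/\ (forall v : {ffun S -> R}, in_VSub inS' v -> in_VSe sp sm (sigma1 M js v)),
      (forall v1 v2 : {ffun S -> R}, in_VSub inS' v1 -> in_VSub inS' v2 ->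
          sigma1 M js v1 = sigma1 M js v2 -> v1 = v2),
      (forall y : {ffun S -> R}, in_VSe sp sm y -> exists2 v, in_VSub inS' v & sigma1 M js v = y)
    & (* phi^aff(sigma^1(alpha), tau(x)) = (sigma_w(alpha), w x w^{-1}) *)
      forall (v : {ffun S -> R}) (x : seq S),
        in_VSub inS' v -> all inS' x ->
        sd_eq M (phi_aff (sigma1 M js v, tau_word sp sm js x))
                (sigw M w v, w ++ x ++ rev w)].
Proof.
move=> HM H3 HB.
exact: (@main_in R S M sp sm js HM H3 HB).
Qed.
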